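(* Let $\mathcal A(z)$, $\mathcal I$ be as in the context and define $\mathcal I_-=\{s\in\mathcal I:\zeta(\mathcal A(s))<0\}$ and $\mathcal S_-=\{z\in\mathbb C:\operatorname{Re}z\in\mathcal I_-\}$. Then $\zeta(\mathcal A(z))<0$ for every $z\in\mathcal S_-$.
   Context: Let $\mathcal N=\{1,\dots,N\}$. Let $\Pi=(\pi_{nn'})$ be an $N\times N$ infinitesimal generator matrix (nonnegative off-diagonal entries, zero row sums). Let $\Psi(z)$ be diagonal with entries $\psi_n(z)=\log E(e^{zL^{(n)}_1})$, Lévy exponents of Lévy processes $L^{(n)}$. Let $\Upsilon(z)$ have diagonal entries $1$ and off-diagonal entries $\upsilon_{nn'}(z)=E(e^{zX_{nn'}})$, MGFs of real random variables ($\upsilon_{nn'}\equiv1$ when $\pi_{nn'}=0$). The domain of the MGF of $X$ is $\{z\in\mathbb C:E(e^{(\operatorname{Re}z)X})<\infty\}$; let $\mathcal S$ be the intersection of the domains of all $\psi_n$ and $\upsilon_{nn'}$ and $\mathcal I=\{\operatorname{Re}z:z\in\mathcal S\}$. Let $\Phi$ be diagonal with nonnegative entries. Set $\mathcal A(z)=\Psi(z)+\Pi\odot\Upsilon(z)-\Phi$ ($\odot$ entrywise product). $\zeta(A)$ is the maximum real part of the eigenvalues of $A$. *)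

(* Defs.v *)
From HB Require Import structures.
From mathcomp Require Import all_boot all_order all_algebra.
From mathcomp Require Import all_classical all_reals all_analysis.
From mathcomp.real_closed Require Import complex.
Set Implicit Arguments. Unset Strict Implicit. Unset Printing Implicit Defensive.
Import Order.TTheory GRing.Theory Num.Theory.
Import numFieldNormedType.Exports.
Local Open Scope classical_set_scope.
Local Open Scope ring_scope.

Section Defs.
Context {d : measure_display} {T : measurableType d} {R : realType}.
Variable P : probability T R.

Definition expC (z : R[i]) : R[i] :=
  Complex (expR (complex.Re z) * cos (complex.Im z)) (expR (complex.Re z) * sin (complex.Im z)).

Definition indep_family (n : nat) (Y : 'I_n -> T -> R) : Prop :=
  forall B : 'I_n -> set R, (forall i, measurable (B i)) ->
    P (\bigcap_(i in [set: 'I_n]) (Y i @^-1` B i)) = (\prod_(i < n) P (Y i @^-1` B i))%E.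

Definition cadlag_on_nonneg (f : R -> R) : Prop :=
  (forall t : R, 0 <= t -> f x @[x --> t^'+] --> f t) /\
  (forall t : R, 0 < t -> cvg (f x @[x --> t^'-])).

Definition levy_process (L : R -> T -> R) : Prop :=
  (forall t, measurable_fun setT (L t)) /\
  [/\ P [set w | L 0 w = 0] = 1%E,
      (forall (n : nat) (t : nat -> R), 0 <= t 0%N -> (forall k, t k < t k.+1) ->
         indep_family (fun i : 'I_n => fun w => L (t i.+1) w - L (t i) w)),
      (forall s t : R, 0 <= s -> s <= t -> forall B : set R, measurable B ->
         P [set w | B (L t w - L s w)] = P [set w | B (L (t - s) w - L 0 w)]),
      (forall t : R, 0 <= t -> forall e : R, 0 < e -> forall eps : R, 0 < eps ->
         exists2 del : R, 0 < del & forall h : R, 0 <= h -> `|h - t| < del ->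
           (P [set w | (e < `|L h w - L t w|)%R] <= eps%:E)%E) &
      (exists N0 : set T, P.-negligible N0 /\
         forall w, ~ N0 w -> cadlag_on_nonneg (fun t => L t w))].

Definition mgf_dom (X : T -> R) (s : R) : Prop :=
  ('E_P[fun w => expR (s * X w)] < +oo)%E.

Definition mgfC (X : T -> R) (z : R[i]) : R[i] :=
  Complex (fine 'E_P[fun w => expR (complex.Re z * X w) * cos (complex.Im z * X w)])
          (fine 'E_P[fun w => expR (complex.Re z * X w) * sin (complex.Im z * X w)]).

Definition is_levy_exponent (X : T -> R) (psi : R[i] -> R[i]) : Prop :=
  (forall z : R[i], mgf_dom X (complex.Re z) -> expC (psi z) = mgfC X z) /\
  (forall s : R, mgf_dom X s -> psi (s%:C)%C = (ln (fine 'E_P[fun w => expR (s * X w)]))%:C%C).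

End Defs.

Definition spectral_abscissa {R : realType} {N : nat} (A : 'M[R[i]]_N) : R :=
  sup (@complex.Re R @` [set a | eigenvalue A a]).

Definition is_generator {R : realType} {N : nat} (Pi : 'M[R]_N) : Prop :=
  (forall i j, i != j -> 0 <= Pi i j) /\ (forall i, \sum_j Pi i j = 0).

(* A(z) = Psi(z) + Pi .* Upsilon(z) - Phi, with Upsilon_nn = 1 and
   Upsilon_nn' = 1 whenever pi_nn' = 0 *)
Definition calA {d : measure_display} {T : measurableType d} {R : realType}
  (P : probability T R) {N : nat} (psi : 'I_N -> R[i] -> R[i]) (Pi : 'M[R]_N)
  (X : 'I_N -> 'I_N -> T -> R) (phi : 'I_N -> R) (z : R[i]) : 'M[R[i]]_N :=
  \matrix_(i, j)
    ((if i == j then psi i z else 0)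
     + (Pi i j)%:C%C * (if (i == j) || (Pi i j == 0) then 1 else mgfC P (X i j) z)
     - (if i == j then (phi i)%:C%C else 0)).

Definition calI {d : measure_display} {T : measurableType d} {R : realType}
  (P : probability T R) {N : nat} (L : 'I_N -> R -> T -> R) (Pi : 'M[R]_N)
  (X : 'I_N -> 'I_N -> T -> R) : set R :=
  [set s | (forall n, mgf_dom P (L n 1) s) /\
           (forall n n', n != n' -> Pi n n' != 0 -> mgf_dom P (X n n') s)].

(* Main.v *)
Require Import Defs.
From HB Require Import structures.
From mathcomp Require Import all_boot all_order all_algebra.
From mathcomp Require Import all_classical all_reals all_analysis.
From mathcomp.real_closed Require Import complex.
From mathcomp.real_closed Require polyrcf.
From mathcomp Require Import measurable_realfun.
From mathcomp Require Import ring lra.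
Import Order.TTheory GRing.Theory Num.Theory.
Local Open Scope classical_set_scope.
Local Open Scope ring_scope.
Set Implicit Arguments. Unset Strict Implicit. Unset Printing Implicit Defensive.
Import polyrcf.

Section PF.
Variable R : rcfType.

Lemma horner_char (n : nat) (A : 'M[R]_n) (x : R) :
  (char_poly A).[x] = \det (x%:M - A).
Proof.
rewrite /char_poly -horner_evalE -det_map_mx; congr (\det _).
apply/matrixP=> i j; rewrite !mxE /= horner_evalE.
case: (i == j); rewrite /= ?mulr1n ?mulr0n; by rewrite ?hornerE.
Qed.

Definition Zmx n (K : 'M[R]_n) := forall i j, i != j -> K i j <= 0.
Definition nosing n (K : 'M[R]_n) := forall s, 0 <= s -> \det (K + s%:M) != 0.
Definition mono n (K : 'M[R]_n) :=
  forall u : 'rV[R]_n, (forall j, 0 <= (u *m K) 0 j) -> forall j, 0 <= u 0 j.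

Lemma detKs n (K : 'M[R]_n) s : \det (K + s%:M) = (char_poly (- K)).[s].
Proof. by rewrite horner_char opprK addrC. Qed.

Lemma big_pos_poly (p : {poly R}) : p \is monic ->
  exists b, forall x, b <= x -> 0 < p.[x].
Proof.
move=> /monicP pm; have [b Hb] := @poly_pinfty_gt_lc _ p ltac:(by rewrite pm ltr01).
by exists b => x /Hb; rewrite pm; apply: lt_le_trans; rewrite ltr01.
Qed.

Lemma sgn_pos n (K : 'M[R]_n) : nosing K -> 0 < \det K.
Proof.
move=> hK; have [b Hb] := big_pos_poly (char_poly_monic (- K)).
have hb := Hb (Num.max b 0) ltac:(by rewrite le_max lexx).
have := hK 0 (lexx _); rewrite raddf0 addr0 => hK0.
rewrite lt_def hK0 /=; rewrite leNgt; apply/negP => hneg.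
have hprod : (char_poly (- K)).[0] * (char_poly (- K)).[Num.max b 0] <= 0.
  rewrite -detKs raddf0 addr0.
  by apply: mulr_le0_ge0; apply: ltW.
have [x /andP[x0 _] rx] := @polyrcf.poly_ivt _ (char_poly (- K)) 0 (Num.max b 0)
   ltac:(by rewrite le_max lexx orbT) hprod.
have x0' : 0 <= x by [].

by move: (hK x x0'); rewrite detKs (rootP rx) eqxx.
Qed.

Lemma nosing_shift n (K : 'M[R]_n) s : nosing K -> 0 <= s -> nosing (K + s%:M).
Proof.
move=> hK s0 t t0; rewrite -addrA -raddfD /=; apply: hK.
exact: addr_ge0.
Qed.

Lemma pos_shift n (K : 'M[R]_n) s : nosing K -> 0 <= s -> 0 < \det (K + s%:M).
Proof. by move=> hK s0; apply: sgn_pos; apply: nosing_shift. Qed.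

Lemma Zmx_shift n (K : 'M[R]_n) s : Zmx K -> Zmx (K + s%:M).
Proof. by move=> hK i j ij; rewrite !mxE (negbTE ij) mulr0n addr0; apply: hK. Qed.

Lemma maxlist (l : seq R) x0 :
  [/\ x0 <= foldr Num.max x0 l, (forall y, y \in l -> y <= foldr Num.max x0 l) &
      (foldr Num.max x0 l = x0 \/ foldr Num.max x0 l \in l)].
Proof.
elim: l => [|y l [IH1 IH2 IH3]] /=; first by split => //; left.
split.
- by rewrite le_max IH1 orbT.
- move=> z; rewrite inE => /orP[/eqP->|zl]; first by rewrite le_max lexx.
  by rewrite le_max IH2 ?orbT.
- rewrite /Num.max; case: ifP => _; last by right; rewrite inE eqxx.
  by case: IH3 => [->|h]; [left|right; rewrite inE h orbT].
Qed.

Lemma right_lim (f : {poly R}) x : (forall y, x < y -> 0 <= f.[y]) -> 0 <= f.[x].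
Proof.
move=> hf; rewrite leNgt; apply/negP => hx.
have [d d0 hd] := @poly_cont _ x f (- f.[x]) ltac:(by rewrite oppr_gt0).
have hy : `|(x + d / 2) - x| < d.
  rewrite addrAC subrr add0r ger0_norm; lra.
have := hd _ hy; have := hf (x + d / 2) ltac:(by rewrite ltrDl divr_gt0).
move=> h1 h2; have := le_lt_trans (ler_norm _) h2.
move: h1; lra.
Qed.

Lemma schur n (a : 'M[R]_1) (b : 'M[R]_(1,n)) (c : 'M[R]_(n,1)) (E : 'M[R]_n) :
  E \in unitmx -> \det (block_mx a b c E) = \det E * (a - b *m invmx E *m c) 0 0.
Proof.
move=> uE.
have -> : block_mx a b c E =
   block_mx (a - b *m invmx E *m c) b 0 E *m block_mx 1%:M 0 (invmx E *m c) 1%:M.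
  rewrite mulmx_block !mulmx0 !mulmx1 !add0r !mulmxA mulmxV // mul1mx.
  by rewrite subrK.
by rewrite det_mulmx det_ublock det_lblock !det1 !mulr1 det_mx11 mulrC.
Qed.

Lemma mono_inv n (E : 'M[R]_n) : mono E -> E \in unitmx -> forall i j, 0 <= invmx E i j.
Proof.
move=> hE uE i j.
have := hE (row i (invmx E)); rewrite -row_mul mulVmx // => /(_ _ j).
rewrite !mxE; apply => k; rewrite !mxE; exact: ler0n.
Qed.

Lemma bil_ge0 n (b : 'M[R]_(1,n)) (X : 'M[R]_n) (c : 'M[R]_(n,1)) :
  (forall j, b 0 j <= 0) -> (forall i j, 0 <= X i j) -> (forall j, c j 0 <= 0) ->
  0 <= (b *m X *m c) 0 0.
Proof.
move=> hb hX hc; rewrite !mxE; apply: sumr_ge0 => k _; rewrite !mxE.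
apply: mulr_le0 => //; rewrite -oppr_ge0 -sumrN; apply: sumr_ge0 => l _.
by rewrite -mulNr; apply: mulr_ge0 => //; rewrite oppr_ge0.
Qed.

Lemma bil_le0 n (b : 'M[R]_(1,n)) (X : 'M[R]_n) (c : 'M[R]_(n,1)) :
  (forall j, 0 <= b 0 j) -> (forall i j, 0 <= X i j) -> (forall j, c j 0 <= 0) ->
  (b *m X *m c) 0 0 <= 0.
Proof.
move=> hb hX hc; rewrite !mxE; rewrite -oppr_ge0 -sumrN; apply: sumr_ge0 => k _.
rewrite !mxE -mulrN; apply: mulr_ge0; last by rewrite oppr_ge0.
by apply: sumr_ge0 => l _; apply: mulr_ge0.
Qed.


Lemma mx11D (A B : 'M[R]_1) : (A + B) 0 0 = A 0 0 + B 0 0. Proof. by rewrite mxE. Qed.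
Lemma mx11B (A B : 'M[R]_1) : (A - B) 0 0 = A 0 0 - B 0 0. Proof. by rewrite !mxE. Qed.
Lemma mx11M (A B : 'M[R]_1) : (A *m B) 0 0 = A 0 0 * B 0 0.
Proof. by rewrite mxE big_ord1. Qed.
Lemma mx11s (s : R) : (s%:M : 'M[R]_1) 0 0 = s. Proof. by rewrite mxE eqxx mulr1n. Qed.

Theorem Gmono n : forall K : 'M[R]_n, Zmx K -> nosing K -> mono K.
Proof.
elim: n => [|n IH] K ZK NK.
  by move=> u _ [m hm].
move: K ZK NK; rewrite -[n.+1]/(1 + n)%N => K ZK NK.
pose a := ulsubmx K; pose b := ursubmx K; pose c := dlsubmx K; pose E := drsubmx K.
have eK : K = block_mx a b c E by rewrite submxK.
have Zb : forall j, b 0 j <= 0.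
  by move=> j; rewrite !mxE; apply: ZK; apply/eqP => /(congr1 val).
have Zc : forall j, c j 0 <= 0.
  by move=> j; rewrite !mxE; apply: ZK; apply/eqP => /(congr1 val).
have ZE : Zmx E.
  by move=> i j ij; rewrite !mxE; apply: ZK; apply: contra ij => /eqP /rshift_inj ->.
have NE : nosing E.
  move=> s0 s00; apply/negP => /eqP hs0.
  have qn0 : char_poly (- E) != 0 := monic_neq0 (char_poly_monic _).
  have rs0 : root (char_poly (- E)) s0 by rewrite /root -detKs hs0.
  have hroots := roots_on_rootsR qn0.
  have [h1 h2 h3] := maxlist (rootsR (char_poly (- E))) s0.
  move: h1 h2 h3; set s1 := foldr _ _ _ => h1 h2 h3.
  have rs1 : root (char_poly (- E)) s1.
    by case: h3 => [->//|]; rewrite -hroots => /andP[].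
  have ub : forall x, root (char_poly (- E)) x -> x <= s1.
    by move=> x rx; apply: h2; rewrite -hroots rx andbT in_itv.
  have s10 : 0 <= s1 := le_trans s00 h1.
  have key : forall s, s1 < s ->
      0 <= (char_poly (- E) * ('X + (a 0 0)%:P) - char_poly (- K)).[s].
    move=> s hs.
    have NEs : nosing (E + s%:M).
      move=> t t0; rewrite -addrA -raddfD /= detKs; apply/negP => /eqP rt.
      have := ub (s + t) ltac:(by rewrite /root rt).
      move: hs t0; lra.
    have ZEs := Zmx_shift s ZE.
    have mEs := IH _ ZEs NEs.
    have pEs := sgn_pos NEs.
    have uEs : E + s%:M \in unitmx by rewrite unitmxE unitfE gt_eqF.
    have eKs : K + s%:M = block_mx (a + s%:M) b c (E + s%:M).
      by rewrite eK (scalar_mx_block 1 n) add_block_mx !addr0.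
    rewrite hornerD hornerN hornerM hornerD hornerX hornerC -!detKs eKs schur //.
    rewrite mx11B mx11D mx11s.
    have hb := bil_ge0 Zb (mono_inv mEs uEs) Zc.
    move: hb pEs; set beta := (_ *m _ *m _) 0 0; set D := \det _ => hb pD.
    have -> : D * (s + a 0 0) - D * (a 0 0 + s - beta) = D * beta by ring.
    by apply: mulr_ge0 => //; apply: ltW.
  have := right_lim key.
  rewrite hornerD hornerN hornerM (rootP rs1) mul0r add0r -detKs oppr_ge0.
  have := pos_shift NK s10; lra.
have mE := IH _ ZE NE.
have pE := sgn_pos NE.
have uE : E \in unitmx by rewrite unitmxE unitfE gt_eqF.
have pK := sgn_pos NK.
have hX := mono_inv mE uE.
have hsig : 0 < (a - b *m invmx E *m c) 0 0.
  by move: pK; rewrite eK schur // pmulr_rgt0.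
move=> u hu j.
rewrite -[u]hsubmxK in hu *.
move: (lsubmx u) (rsubmx u) hu => u0 u' hu.
have euK : row_mx u0 u' *m K = row_mx (u0 *m a + u' *m c) (u0 *m b + u' *m E).
  by rewrite eK mul_row_block.
have hw0 : 0 <= (u0 *m a + u' *m c) 0 0.
  by have := hu (lshift n 0); rewrite euK row_mxEl.
have hw' : forall j, 0 <= (u0 *m b + u' *m E) 0 j.
  by move=> k; have := hu (rshift 1 k); rewrite euK row_mxEr.
move: hw'; set w' := u0 *m b + u' *m E => hw'.
have eu'E : u' *m E = w' - u0 *m b by rewrite /w' addrC addKr.
have eu' : u' = (w' - u0 *m b) *m invmx E by rewrite -eu'E mulmxK.
have ew0 : (u0 *m a + u' *m c) 0 0 =
    u0 0 0 * (a - b *m invmx E *m c) 0 0 + (w' *m invmx E *m c) 0 0.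
  rewrite -mx11M -mx11D eu' mulmxBl mulmxBl mulmxBr !mulmxA.
  by rewrite addrA addrAC.
have hu0 : 0 <= u0 0 0.
  have := bil_le0 hw' hX Zc; move: hw0; rewrite ew0 => h1 h2.
  have : 0 <= u0 0 0 * (a - b *m invmx E *m c) 0 0 by move: h1 h2; lra.
  by rewrite pmulr_lge0.
have hu' : forall k, 0 <= u' 0 k.
  apply: mE => k; rewrite eu'E.
  have -> : (w' - u0 *m b) 0 k = w' 0 k - u0 0 0 * b 0 k.
    by rewrite !mxE big_ord1 /b !mxE.
  have := hw' k; have := Zb k; nra.
by rewrite -(splitK j); case: (fintype.split j) => [j0|j1] /=; rewrite ?row_mxEl ?row_mxEr // (ord1 j0).
Qed.

Lemma PF n (A : 'M[R]_n) : (forall i j, i != j -> 0 <= A i j) ->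
  forall u : 'rV_n, (forall j, 0 <= u 0 j) -> (forall j, 0 <= (u *m A) 0 j) -> u != 0 ->
  ~ (forall s, 0 <= s -> \det (s%:M - A) != 0).
Proof.
move=> MA u hu huA un0 hs.
have ZA : Zmx (- A) by move=> i j ij; rewrite mxE oppr_le0; apply: MA.
have NA : nosing (- A) by move=> s s0; rewrite addrC; apply: hs.
have := @Gmono _ _ ZA NA (- u) ltac:(by move=> j; rewrite mulNmx mulmxN opprK).
move=> h; apply/negP: un0; apply/negPn/eqP/matrixP => i j.
rewrite (ord1 i) mxE; apply/eqP; rewrite eq_le hu andbT.
by have := h j; rewrite mxE oppr_ge0.
Qed.

End PF.

Section Cmp.
Variable R : rcfType.
Local Open Scope complex_scope.
Local Open Scope ring_scope.

Definition nr (x : R[i]) : R := complex.Re `|x|.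

Lemma normC_real (x : R[i]) : `|x| = (nr x)%:C.
Proof. by rewrite /nr normc_def. Qed.

Lemma nr_ge0 (x : R[i]) : 0 <= nr x.
Proof. by rewrite -ler0c -normC_real normr_ge0. Qed.

Lemma nr_sq (x : R[i]) : nr x ^+ 2 = complex.Re x ^+ 2 + complex.Im x ^+ 2.
Proof. by rewrite /nr normc_def /= sqr_sqrtr // addr_ge0 // sqr_ge0. Qed.

Lemma Re_le_nr (x : R[i]) : complex.Re x <= nr x.
Proof.
have h1 := nr_ge0 x; have h2 := nr_sq x; have h3 := sqr_ge0 (complex.Im x).
nra.
Qed.

Lemma ReB (x y : R[i]) : complex.Re (x - y) = complex.Re x - complex.Re y.
Proof. by case: x => ? ?; case: y. Qed.

Lemma eig_real n (A : 'M[R]_n) r : \det (r%:M - A) = 0 ->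
  eigenvalue (map_mx (real_complex R) A) (r%:C).
Proof.
move=> h; rewrite (eigenvalue_map (real_complex R)) eigenvalue_root_char.
by rewrite /root horner_char h.
Qed.

Lemma compare n (A : 'M[R]_n) (B : 'M[R[i]]_n) mu :
  (forall i j, i != j -> 0 <= A i j) ->
  (forall j, complex.Re (B j j) <= A j j) ->
  (forall i j, i != j -> `|B i j| <= (A i j)%:C) ->
  eigenvalue B mu ->
  exists2 r, complex.Re mu <= r & \det (r%:M - A) = 0.
Proof.
move=> MA hd ho /eigenvalueP [v hv vn0].
set t := complex.Re mu.
pose u : 'rV[R]_n := \row_j nr (v 0 j).
have hu : forall j, 0 <= u 0 j by move=> j; rewrite mxE nr_ge0.
have un0 : u != 0.
  apply: contra vn0 => /eqP u0; apply/eqP/matrixP => i j.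
  rewrite (ord1 i) mxE; apply/eqP; rewrite -normr_eq0 normC_real.
  by have := congr1 (fun M : 'rV[R]_n => M 0 j) u0; rewrite !mxE => ->.
have MAt : forall i j, i != j -> 0 <= (A - t%:M) i j.
  by move=> i j ij; rewrite !mxE (negbTE ij) mulr0n subr0; apply: MA.
have huA : forall j, 0 <= (u *m (A - t%:M)) 0 j.
  move=> j.
  have ev : \sum_i v 0 i * B i j = mu * v 0 j.
    by have := congr1 (fun M : 'rV[R[i]]_n => M 0 j) hv; rewrite !mxE.
  rewrite (bigD1 j) //= in ev.
  have ev2 : (mu - B j j) * v 0 j = \sum_(i | i != j) v 0 i * B i j.
    by rewrite mulrBl -ev addrAC mulrC subrr add0r.
  have H1 : `|mu - B j j| * `|v 0 j| <= \sum_(i | i != j) `|v 0 i| * (A i j)%:C.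
    rewrite -normrM ev2 (le_trans (ler_norm_sum _ _ _)) //.
    apply: ler_sum => i ij; rewrite normrM; apply: ler_wpM2l => //.
    exact: ho.
  move: H1; rewrite !normC_real -rmorphM.
  under eq_bigr => i _ do rewrite normC_real -rmorphM.
  rewrite -rmorph_sum lecR => H1.
  have H2 : t - A j j <= nr (mu - B j j).
    apply: le_trans (Re_le_nr _); rewrite ReB; have := hd j; rewrite /t; lra.
  have H3 : (t - A j j) * nr (v 0 j) <= nr (mu - B j j) * nr (v 0 j).
    by apply: ler_wpM2r => //; apply: nr_ge0.
  rewrite mulmxBr mul_mx_scalar !mxE (bigD1 j) //= !mxE.
  have -> : \sum_(i | i != j) u 0 i * A i j = \sum_(i | i != j) nr (v 0 i) * A i j.
    by apply: eq_bigr => i _; rewrite mxE.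
  move: H1 H3; set S := \sum_(i | _) _; lra.
have [s s0 hs] : exists2 s, 0 <= s & \det (s%:M - (A - t%:M)) = 0.
  case: (pselect (exists2 s, 0 <= s & \det (s%:M - (A - t%:M)) = 0)) => // hn.
  exfalso; apply: (PF MAt hu huA un0) => s s0; apply/eqP => hs; apply: hn.
  by exists s.
exists (s + t); first by rewrite lerDr.
by rewrite -hs opprB addrA -raddfD.
Qed.

End Cmp.

Section Prob.
Context {d : measure_display} {T : measurableType d} {R : realType}.
Variable P : probability T R.

Lemma mgf_bound (X : T -> R) (z : R[i]) : measurable_fun setT X ->
  mgf_dom P X (complex.Re z) ->
  Num.sqrt (complex.Re (mgfC P X z) ^+ 2 + complex.Im (mgfC P X z) ^+ 2)
    <= fine 'E_P[fun w => expR (complex.Re z * X w)].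
Proof.
move=> mX hdom.
set s := complex.Re z; set t := complex.Im z.
pose g := fun w => expR (s * X w).
pose c := fun w => g w * cos (t * X w).
pose e := fun w => g w * sin (t * X w).
have msX : forall k : R, measurable_fun setT (fun w => k * X w).
  by move=> k; apply: measurable_funM => //.
have mg : measurable_fun setT g.
  by apply: measurableT_comp; [exact: measurable_expR | exact: msX].
have mc : measurable_fun setT c.
  apply: measurable_funM => //; apply: measurableT_comp (msX t).
  by apply: continuous_measurable_fun; exact: continuous_cos.
have me : measurable_fun setT e.
  apply: measurable_funM => //; apply: measurableT_comp (msX t).
  by apply: continuous_measurable_fun; exact: continuous_sin.
have gi : P.-integrable setT (EFin \o g).
  apply/integrableP; split; first exact/measurable_EFinP.
  under eq_integral => w _ do rewrite gee0_abs ?lee_fin ?expR_ge0 //.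
  by move: hdom; rewrite /mgf_dom unlock.
have gL : g \in Lfun P 1 by apply/Lfun1_integrable.
have cL : c \in Lfun P 1.
  apply/Lfun1_integrable; apply: (le_integrable measurableT _ _ gi); first exact/measurable_EFinP.
  move=> w _ /=; rewrite lee_fin normrM.
  by rewrite ler_piMr // cos_max.
have eL : e \in Lfun P 1.
  apply/Lfun1_integrable; apply: (le_integrable measurableT _ _ gi); first exact/measurable_EFinP.
  move=> w _ /=; rewrite lee_fin normrM.
  by rewrite ler_piMr // sin_max.
have -> : mgfC P X z = Complex (fine 'E_P[c]%E) (fine 'E_P[e]%E) by [].
rewrite /=.
set a := fine 'E_P[c]%E; set b := fine 'E_P[e]%E; set m := fine 'E_P[g]%E.
have Ec : ('E_P[c] = a%:E)%E by rewrite fineK // expectation_fin_num.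
have Ee : ('E_P[e] = b%:E)%E by rewrite fineK // expectation_fin_num.
have Eg : ('E_P[g] = m%:E)%E by rewrite fineK // expectation_fin_num.
set n := Num.sqrt (a ^+ 2 + b ^+ 2).
have n0 : 0 <= n by apply: sqrtr_ge0.
have nsq : n ^+ 2 = a ^+ 2 + b ^+ 2 by rewrite sqr_sqrtr // addr_ge0 // sqr_ge0.
have acL : a \o* c \in Lfun P 1 by apply: Lfun_scale.
have beL : b \o* e \in Lfun P 1 by apply: Lfun_scale.
have ngL : n \o* g \in Lfun P 1 by apply: Lfun_scale.
have key : ((a ^+ 2 + b ^+ 2)%:E <= (n * m)%:E)%E.
  have -> : ((a ^+ 2 + b ^+ 2)%:E = 'E_P[(a \o* c) \+ (b \o* e)])%E.
    by rewrite expectationD // !expectationZl // Ec Ee -!EFinM -EFinD !expr2.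
  have -> : ((n * m)%:E = 'E_P[n \o* g])%E by rewrite expectationZl // Eg.
  rewrite unlock; apply: le_integral.
  - exact: measurableT.
  - have h : a \o* c + b \o* e \in Lfun P 1 by apply: rpredD.
    by move/Lfun1_integrable: h.
  - by move/Lfun1_integrable: ngL.
  move=> w _; rewrite lee_fin /= /c /e.
  have hcs := cos2Dsin2 (t * X w).
  have gp : 0 <= g w by apply: expR_ge0.
  set co := cos _ in hcs *; set si := sin _ in hcs *.
  have : a * co + b * si <= n.
    have h : (a * co + b * si) ^+ 2 <= n ^+ 2.
      rewrite nsq; have := sqr_ge0 (a * si - b * co); nra.
    nra.
  nra.
have m0 : 0 <= m by rewrite /m fine_ge0 // expectation_ge0 // => w; apply: expR_ge0.
move: key; rewrite lee_fin -nsq => key.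
have [->|np] := eqVneq n 0; first by [].
have np' : 0 < n by rewrite lt_def np n0.
by move: key; rewrite expr2 ler_pM2l.
Qed.

End Prob.

Section Extra.
Context {d : measure_display} {T : measurableType d} {R : realType}.
Variable P : probability T R.
Local Open Scope complex_scope.

Lemma mgfC_real (X : T -> R) (s : R) :
  mgfC P X (s%:C) = (fine 'E_P[fun w => expR (s * X w)]%E)%:C.
Proof.
rewrite /mgfC /=; congr Complex.
  by congr fine; congr expectation; apply/funext => w; rewrite mul0r cos0 mulr1.
have -> : (fun w => expR (s * X w) * sin (0 * X w)) = cst 0.
  by apply/funext => w; rewrite mul0r sin0 mulr0.
by rewrite expectation_cst.
Qed.

Lemma nr_expC (w : R[i]) : nr (expC w) = expR (complex.Re w).
Proof.
rewrite /nr normc_def /= !exprMn -mulrDr cos2Dsin2 mulr1.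
by rewrite sqrtr_sqr ger0_norm // expR_ge0.
Qed.
End Extra.


Lemma ReD (R : rcfType) (x y : R[i]) : complex.Re (x + y) = complex.Re x + complex.Re y.
Proof. by case: x => ? ?; case: y. Qed.

Lemma Re_le_sum (R : rcfType) (rs : seq R[i]) a : a \in rs ->
  complex.Re a <= \sum_(x <- rs) `|complex.Re x|.
Proof.
elim: rs => [//|x rs IH]; rewrite inE big_cons => /orP[/eqP->|h].
  by rewrite (le_trans (ler_norm _)) // lerDl sumr_ge0.
by rewrite (le_trans (IH h)) // lerDr.
Qed.

Unset Implicit Arguments.
Theorem proposition4 (d : measure_display) (T : measurableType d) (R : realType)
  (P : probability T R) (N : nat)
  (L : 'I_N -> R -> T -> R) (psi : 'I_N -> R[i] -> R[i])
  (X : 'I_N -> 'I_N -> T -> R) (Pi : 'M[R]_N) (phi : 'I_N -> R) :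
  (forall n, levy_process P (L n)) ->
  (forall n, is_levy_exponent P (L n 1) (psi n)) ->
  (forall n n', measurable_fun setT (X n n')) ->
  is_generator Pi ->
  (forall n, 0 <= phi n) ->
  let I := calI P L Pi X in
  let Iminus := [set s | I s /\ spectral_abscissa (calA P psi Pi X phi (s%:C)%C) < 0] in
  let Sminus := [set z : R[i] | Iminus (complex.Re z)] in
  forall z, Sminus z -> spectral_abscissa (calA P psi Pi X phi z) < 0.
Proof.
move=> hL hpsi hX hgen hphi I Iminus Sminus z [[hIL hIX] hneg].
move: hIL hIX hneg; set s := complex.Re z => hIL hIX hneg.
pose m := fun n : 'I_N => fine ('E_P[fun w => expR (s * L n 1%R w)])%E.
pose mx := fun i j : 'I_N => fine ('E_P[fun w => expR (s * X i j w)])%E.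
pose Ar : 'M[R]_N := \matrix_(i, j) ((if i == j then ln (m i) else 0)
   + Pi i j * (if (i == j) || (Pi i j == 0) then 1 else mx i j)
   - (if i == j then phi i else 0)).
have F1 : forall n, psi n (s%:C)%C = (ln (m n))%:C%C := fun n => (hpsi n).2 s (hIL n).
have eA : calA P psi Pi X phi (s%:C)%C = map_mx (real_complex R) Ar.
  apply/matrixP => i j; rewrite !mxE F1 mgfC_real.
  by case: (i == j); case: (Pi i j == 0); rewrite /= ?rmorphB ?rmorphD ?rmorphM ?rmorph0 ?rmorph1.
have MA : forall i j, i != j -> 0 <= Ar i j.
  move=> i j ij; rewrite mxE (negbTE ij) /= subr0 add0r.
  have P0 := hgen.1 i j ij.
  case: ifP => _; rewrite ?mulr1 //; apply: mulr_ge0 => //.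
  by rewrite /mx fine_ge0 // expectation_ge0 // => w; exact: expR_ge0.
have hd : forall j, complex.Re (calA P psi Pi X phi z j j) <= Ar j j.
  move=> j; rewrite !mxE eqxx /= !mulr1 ReB ReD /=.
  rewrite lerD2r lerD2r.
  have hdom := hIL j.
  have e1 := (hpsi j).1 z hdom.
  have b1 := mgf_bound ((hL j).1 1) hdom.
  have h : expR (complex.Re (psi j z)) <= m j by rewrite -nr_expC e1 /nr normc_def.
  have mpos : 0 < m j := lt_le_trans (expR_gt0 _) h.
  by rewrite -[complex.Re (psi j z)]expRK ler_ln ?posrE ?expR_gt0.
have ho : forall i j, i != j -> `|calA P psi Pi X phi z i j| <= (Ar i j)%:C%C.
  move=> i j ij; rewrite !mxE (negbTE ij) /= subr0 add0r.
  have P0 := hgen.1 i j ij.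
  rewrite normrM ger0_norm ?ler0c // add0r subr0 rmorphM.
  apply: ler_wpM2l; first by rewrite ler0c.
  case: ifP => hP0; first by rewrite normr1.
  rewrite normC_real lecR /nr normc_def /=.
  exact: mgf_bound (hX i j) (hIX i j ij (negbT hP0)).
pose SA := @complex.Re R @` [set a | eigenvalue (calA P psi Pi X phi (s%:C)%C) a].
have hub : has_ubound SA.
  have [rs hrs] := closed_field_poly_normal (char_poly (calA P psi Pi X phi (s%:C)%C)).
  exists (\sum_(x <- rs) `|complex.Re x|) => y [a ha <-].
  apply: Re_le_sum; move: ha; rewrite /= eigenvalue_root_char hrs.
  by rewrite (monicP (char_poly_monic _)) scale1r root_prod_XsubC.
have hB : forall mu, eigenvalue (calA P psi Pi X phi z) mu -> complex.Re mu <= sup SA.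
  move=> mu hmu; have [r hr hdet] := @compare R N Ar (calA P psi Pi X phi z) mu MA hd ho hmu.
  apply: (le_trans hr); apply: (ub_le_sup hub); exists (r%:C)%C; last by [].
  rewrite /= eA. exact: (@eig_real R N Ar r hdet).
have [N0|Npos] := posnP N.
  exfalso; have : SA = set0.
    apply/seteqP; split => // y [a /eigenvalueP [v _ vn0] _]; apply/negP: vn0.
    by apply/negPn/eqP/matrixP => i [j hj]; exfalso; move: hj; rewrite N0.
  by move: hneg; rewrite /spectral_abscissa -/SA => + hS; rewrite hS sup0 ltxx.
rewrite /spectral_abscissa; apply: le_lt_trans hneg; apply: ge_sup.
  have [mu hmu] := eigenvalue_closed (calA P psi Pi X phi z) Npos.
  by exists (complex.Re mu), mu.
by move=> y [mu hmu <-]; exact: hB.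
Qed.
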